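(* Let $\tau\colon\mathbb R^{\mathbb Z}\to\mathbb R^{\mathbb Z}$ be defined by $\tau(x)(n)=x(n+1)-x(n)^2$ for all $x\in\mathbb R^{\mathbb Z}$ and $n\in\mathbb Z$. Then $\tau$ is an algebraic cellular automaton over $\mathbb R$ (with memory set $\{0,1\}$ and local defining map $(x_0,x_1)\mapsto x_1-x_0^2$), its image $\tau(\mathbb R^{\mathbb Z})$ is dense in $\mathbb R^{\mathbb Z}$ for the prodiscrete topology, the constant configuration $z\equiv 1$ is not in $\tau(\mathbb R^{\mathbb Z})$, and hence $\tau(\mathbb R^{\mathbb Z})$ is not closed in $\mathbb R^{\mathbb Z}$ for the prodiscrete topology.
   Context: The prodiscrete topology on $\mathbb R^{\mathbb Z}$ is the product topology where each factor $\mathbb R$ is given the discrete topology. A cellular automaton over $\mathbb Z$ with alphabet $\mathbb R$ is a map $\tau$ for which there exist a finite $M\subset\mathbb Z$ and $\mu\colon\mathbb R^M\to\mathbb R$ with $\tau(x)(n)=\mu((m\mapsto x(n+m))_{m\in M})$; it is algebraic if $\mu$ is a polynomial map. *)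

(* Defs.v *)
From Stdlib Require Import Reals ZArith List.
Open Scope R_scope.

Definition config := Z -> R.

Definition tau (x : config) : config := fun n => x (n + 1)%Z - (x n) ^ 2.

(* Restriction of the shifted configuration to the memory set M (a finite
   duplicate-free list of integers), i.e. the element (m |-> x(n+m)) of R^M,
   represented as the list of its values in the order of M. *)
Definition pattern (M : list Z) (x : config) (n : Z) : list R :=
  map (fun m => x (n + m)%Z) M.

Definition is_cellular_automaton (t : config -> config) : Prop :=
  exists (M : list Z) (mu : list R -> R), NoDup M /\
    forall x n, t x n = mu (pattern M x n).

Inductive polyexpr : Type :=
| PConst : R -> polyexpr
| PVar : nat -> polyexpr
| PAdd : polyexpr -> polyexpr -> polyexpr
| PMul : polyexpr -> polyexpr -> polyexpr.

Fixpoint peval (p : polyexpr) (v : list R) : R :=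
  match p with
  | PConst c => c
  | PVar i => nth i v 0
  | PAdd p q => peval p v + peval q v
  | PMul p q => peval p v * peval q v
  end.

Definition is_polynomial_map (k : nat) (mu : list R -> R) : Prop :=
  exists p : polyexpr, forall v, length v = k -> mu v = peval p v.

Definition is_algebraic_CA (t : config -> config) : Prop :=
  exists (M : list Z) (mu : list R -> R), NoDup M /\
    is_polynomial_map (length M) mu /\
    forall x n, t x n = mu (pattern M x n).

(* Prodiscrete topology on R^Z: U is open iff every point of U has a
   basic neighbourhood {y | y = x on F} (F finite) contained in U. *)
Definition prodiscrete_open (U : config -> Prop) : Prop :=
  forall x, U x -> exists F : list Z,
    forall y, (forall k, In k F -> y k = x k) -> U y.

Definition prodiscrete_closed (S : config -> Prop) : Prop :=
  prodiscrete_open (fun x => ~ S x).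

Definition prodiscrete_dense (S : config -> Prop) : Prop :=
  forall U, prodiscrete_open U -> (exists x, U x) -> exists y, U y /\ S y.

Definition image (t : config -> config) : config -> Prop :=
  fun z => exists x, t x = z.

Definition mu_tau (v : list R) : R := nth 1 v 0 - (nth 0 v 0) ^ 2.

(* Main.v *)
Require Import Defs.
From Stdlib Require Import Reals ZArith List Lra Lia.
Open Scope R_scope.

Fixpoint fseq (x : config) (N : Z) (m : nat) : R :=
  match m with
  | O => 0
  | S m' => x (N + Z.of_nat m')%Z + (fseq x N m') ^ 2
  end.

Definition wpre (x : config) (N : Z) : config :=
  fun k => if (k <? N)%Z then 0 else fseq x N (Z.to_nat (k - N)).

Lemma wpre_ok x N k : (N <= k)%Z -> tau (wpre x N) k = x k.
Proof.
  intros H. unfold tau, wpre.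
  destruct (k + 1 <? N)%Z eqn:E1; [apply Z.ltb_lt in E1; lia|].
  destruct (k <? N)%Z eqn:E2; [apply Z.ltb_lt in E2; lia|].
  replace (Z.to_nat (k + 1 - N)) with (S (Z.to_nat (k - N))) by lia.
  simpl fseq. replace (N + Z.of_nat (Z.to_nat (k - N)))%Z with k by lia. ring.
Qed.

Definition lowb (F : list Z) : Z := (- fold_right (fun k acc => Z.abs k + acc) 0 F)%Z.

Lemma lowb_ok F k : In k F -> (lowb F <= k)%Z.
Proof.
  unfold lowb. induction F as [|a F IH]; simpl; [tauto|].
  assert (0 <= fold_right (fun k acc => Z.abs k + acc) 0 F)%Z.
  { clear. induction F; simpl; lia. }
  intros [->|H1]; [lia|]. specialize (IH H1). lia.
Qed.

Lemma realize x F : exists w, forall k, In k F -> tau w k = x k.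
Proof.
  exists (wpre x (lowb F)). intros k Hk. apply wpre_ok, lowb_ok, Hk.
Qed.

Lemma not_one : ~ image tau (fun _ => 1).
Proof.
  intros [x Hx].
  assert (Hs : forall n, x (n + 1)%Z = 1 + x n ^ 2).
  { intro n. assert (H := f_equal (fun f => f n) Hx). simpl in H. unfold tau in H. lra. }
  assert (Hge : forall n, 1 <= x n).
  { intro n. replace n with ((n - 1) + 1)%Z by lia. rewrite Hs. nra. }
  assert (Hind : forall m : nat, x 0%Z >= x (- Z.of_nat m)%Z + 3/4 * INR m).
  { induction m as [|m IH].
    - simpl. replace (- Z.of_nat 0)%Z with 0%Z by lia. lra.
    - rewrite S_INR.
      assert (E : (- Z.of_nat m)%Z = (- Z.of_nat (S m) + 1)%Z) by lia.
      rewrite E, Hs in IH. pose proof (pow2_ge_0 (x (- Z.of_nat (S m))%Z - 1/2)). nra. }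
  destruct (INR_archimed (3/4) (x 0%Z)) as [m Hm]; [lra|].
  specialize (Hind m). specialize (Hge (- Z.of_nat m)%Z). lra.
Qed.

Theorem mainTheorem11 :
  is_algebraic_CA tau /\
  is_polynomial_map 2 mu_tau /\
  (forall x n, tau x n = mu_tau (pattern (0%Z :: 1%Z :: nil) x n)) /\
  prodiscrete_dense (image tau) /\
  ~ image tau (fun _ => 1) /\
  ~ prodiscrete_closed (image tau).
Proof.
  assert (Hpoly : forall k, is_polynomial_map k mu_tau).
  { intro k. exists (PAdd (PVar 1) (PMul (PConst (-1)) (PMul (PVar 0) (PVar 0)))).
    intros v _. unfold mu_tau. simpl. ring. }
  assert (Hpat : forall x n, tau x n = mu_tau (pattern (0%Z :: 1%Z :: nil) x n)).
  { intros x n. unfold tau, mu_tau, pattern. simpl. rewrite Z.add_0_r. reflexivity. }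
  split; [|split; [|split; [|split; [|split]]]].
  - exists (0%Z :: 1%Z :: nil), mu_tau. split; [|split].
    + constructor; [simpl; intros [H|[]]; discriminate|]. constructor; [simpl; tauto|constructor].
    + apply Hpoly.
    + apply Hpat.
  - apply Hpoly.
  - apply Hpat.
  - intros U HU [x Ux]. destruct (HU x Ux) as [F HF].
    destruct (realize x F) as [w Hw].
    exists (tau w). split; [apply HF; exact Hw | exists w; reflexivity].
  - apply not_one.
  - intros Hc. destruct (Hc (fun _ => 1) not_one) as [F HF].
    destruct (realize (fun _ => 1) F) as [w Hw].
    apply (HF (tau w) Hw). exists w; reflexivity.
Qed.
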